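(* Let $G=(V,E)$ be a connected almost bipartite permutation graph that contains a hole, let $C$ be a shortest hole, $m=|C|$, $c_0,\dots,c_{m-1}$ its vertices in cyclic order (indices modulo $m$), and for each $i$ let $A_i=\{v\in V: N(v)\cap C=\{c_{i-1},c_{i+1}\}\}$ and $B_i=\{v\in V: N(v)\cap C=\{c_i\}\}$ (indices modulo $m$). Let $i\in\{0,\dots,m-1\}$ and let $(p,q)\in\{(i-2,i-1),(i+2,i+1)\}$. Then: (1) For every $w,w'\in B_p\cup A_q$ the sets $N(w)\cap A_i$ and $N(w')\cap A_i$ are comparable with respect to inclusion; moreover, if $w\in B_p$ and $w'\in A_q$, then $N(w)\cap A_i\subseteq N(w')\cap A_i$. (2) For every $u,u'\in A_p\cup B_q$ the sets $N(u)\cap B_i$ and $N(u')\cap B_i$ are comparable with respect to inclusion; moreover, if $u\in A_p$ and $u'\in B_q$, then $N(u)\cap B_i\subseteq N(u')\cap B_i$.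
   Context: All graphs are finite, simple, undirected; $N(v)$ is the open neighborhood of $v$. A hole is an induced cycle on at least five vertices. $K_3$ is the triangle, $C_k$ the cycle on $k$ vertices. $T_2$ is the tree on 7 vertices obtained from the claw $K_{1,3}$ by subdividing each edge once. $X_2$ is the 7-vertex graph obtained from a 4-cycle by attaching one new pendant vertex to each of three of its four vertices. $X_3$ is the 7-vertex graph obtained from the domino (two 4-cycles sharing exactly one edge) by attaching one new pendant vertex to one endpoint of the shared edge. A graph is an almost bipartite permutation graph if it contains none of $T_2, X_2, X_3, K_3, C_5,\dots,C_9$ as an induced subgraph. *)

(* Defs.v *)
From mathcomp Require Import all_boot.
Set Implicit Arguments. Unset Strict Implicit. Unset Printing Implicit Defensive.

(* A finite simple graph: vertex type T : finType, adjacency e : rel T,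
   assumed symmetric and irreflexive in the theorem. *)

Definition mkgraph {n : nat} (s : seq (nat * nat)) : rel 'I_n :=
  fun x y => ((nat_of_ord x, nat_of_ord y) \in s) || ((nat_of_ord y, nat_of_ord x) \in s).

Definition contains_induced (T : finType) (e : rel T) (n : nat) (h : rel 'I_n) : Prop :=
  exists f : 'I_n -> T, injective f /\ forall x y, e (f x) (f y) = h x y.

Definition cycle_graph (k : nat) : rel 'I_k :=
  fun x y => (nat_of_ord y == (x.+1 %% k)) || (nat_of_ord x == (y.+1 %% k)).

Definition K3 : rel 'I_3 := mkgraph [:: (0,1); (1,2); (0,2)].
(* T2: claw with center 0, each edge subdivided once. *)
Definition T2 : rel 'I_7 := mkgraph [:: (0,1); (0,2); (0,3); (1,4); (2,5); (3,6)].
(* X2: 4-cycle 0-1-2-3-0 with pendants 4,5,6 at 0,1,2. *)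
Definition X2 : rel 'I_7 :=
  mkgraph [:: (0,1); (1,2); (2,3); (3,0); (0,4); (1,5); (2,6)].
(* X3: domino (2x3 grid 0-1-2 / 3-4-5, shared edge 1-4) with a pendant 6 at 1. *)
Definition X3 : rel 'I_7 :=
  mkgraph [:: (0,1); (1,2); (3,4); (4,5); (0,3); (1,4); (2,5); (1,6)].

Definition almost_bip_perm (T : finType) (e : rel T) : Prop :=
  ~ contains_induced e T2 /\ ~ contains_induced e X2 /\ ~ contains_induced e X3 /\
  ~ contains_induced e K3 /\
  (forall k, 5 <= k <= 9 -> ~ contains_induced e (@cycle_graph k)).

Definition connected_graph (T : finType) (e : rel T) : Prop :=
  forall x y : T, connect e x y.

Definition is_hole (T : finType) (e : rel T) (k : nat) (c : nat -> T) : Prop :=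
  5 <= k /\
  (forall i j, i < k -> j < k -> c i = c j -> i = j) /\
  (forall i j, i < k -> j < k ->
     e (c i) (c j) = (j == i.+1 %% k) || (i == j.+1 %% k)).

Definition shortest_hole (T : finType) (e : rel T) (m : nat) (c : nat -> T) : Prop :=
  is_hole e m c /\ forall k c', is_hole e k c' -> m <= k.

Definition nbhd (T : finType) (e : rel T) (v : T) : {set T} := [set w | e v w].

Definition holeset (T : finType) (m : nat) (c : nat -> T) : {set T} :=
  [set c (nat_of_ord j) | j : 'I_m].

Definition Aset (T : finType) (e : rel T) (m : nat) (c : nat -> T) (i : nat) : {set T} :=
  [set v | nbhd e v :&: holeset m c == [set c ((i + m - 1) %% m); c ((i + 1) %% m)]].

Definition Bset (T : finType) (e : rel T) (m : nat) (c : nat -> T) (i : nat) : {set T} :=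
  [set v | nbhd e v :&: holeset m c == [set c (i %% m)]].

(* Main.v *)
Require Import Defs.
From mathcomp Require Import all_boot.
From mathcomp Require Import zify.
Set Implicit Arguments. Unset Strict Implicit. Unset Printing Implicit Defensive.

Section Hole.
Variables (T : finType) (e : rel T) (m : nat) (c : nat -> T).
Hypothesis Hh : is_hole e m c.
Hypothesis Hm : 10 <= m.
Variable K : nat.

Let D t := c ((K + t) %% m).

Lemma cinj x y : x < m -> y < m -> (c x == c y) = (x == y).
Proof.
case: Hh => _ [Hi _] xm ym; apply/eqP/eqP => [/Hi|->] //; exact.
Qed.

Lemma modeq_small s s' : s < m -> s' < m -> ((K + s) %% m == (K + s') %% m) = (s == s').
Proof. by move=> sm s'm; rewrite eqn_modDl !modn_small. Qed.

Lemma Dinj s s' : s < m -> s' < m -> (D s == D s') = (s == s').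
Proof.
have m0 : 0 < m by lia.
by move=> sm s'm; rewrite /D cinj ?ltn_pmod // modeq_small.
Qed.

Lemma hd t s : t <= 8 -> s <= 8 -> e (D t) (D s) = (s == t.+1) || (t == s.+1).
Proof.
have m0 : 0 < m by lia.
move=> t8 s8; case: Hh => _ [_ Ha]; rewrite /D Ha ?ltn_pmod //.
rewrite -[((K + t) %% m).+1]addn1 -[((K + s) %% m).+1]addn1 !modnDml -!addnA !modeq_small; lia.
Qed.

Lemma hA t v : 0 < t <= 7 -> v \in Aset e m c ((K + t) %% m) ->
  forall s, s <= 8 -> e v (D s) = (s == t.-1) || (s == t.+1).
Proof.
have m0 : 0 < m by lia.
move=> /andP[t0 t7]; rewrite inE => /eqP HA s s8.
have Hs : D s \in holeset m c.
  by apply/imsetP; exists (Ordinal (ltn_pmod (K + s) m0)).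
have -> : e v (D s) = (D s \in nbhd e v :&: holeset m c) by rewrite inE Hs andbT inE.
rewrite HA !inE.
have -> : ((K + t) %% m + m - 1) %% m = (K + t.-1) %% m.
  rewrite -addnBA // modnDml -addnA (_ : K + (t + (m - 1)) = (K + t.-1) + m); last by lia.
  by rewrite modnDr.
rewrite -addn1 modnDml -addnA addn1.
by rewrite -/(D _) -/(D (t.-1)) -/(D (t.+1)) !Dinj //; lia.
Qed.

Lemma hB t v : t <= 8 -> v \in Bset e m c ((K + t) %% m) ->
  forall s, s <= 8 -> e v (D s) = (s == t).
Proof.
have m0 : 0 < m by lia.
move=> t8; rewrite inE => /eqP HB s s8.
have Hs : D s \in holeset m c.
  by apply/imsetP; exists (Ordinal (ltn_pmod (K + s) m0)).
have -> : e v (D s) = (D s \in nbhd e v :&: holeset m c) by rewrite inE Hs andbT inE.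
by rewrite HB !inE modn_mod -/(D _) Dinj //; lia.
Qed.
End Hole.

Section S.
Variables (T : finType) (e : rel T).
Hypothesis Hsym : symmetric e.
Hypothesis Hirr : irreflexive e.
Hypothesis Hab : almost_bip_perm e.

Definition sepcheck n (hn : nat -> nat -> bool) :=
  all (fun i => all (fun j => (i == j) || hn i j ||
     has (fun k => hn i k != hn j k) (iota 0 n)) (iota 0 n)) (iota 0 n).

Lemma mk_induced n (h : rel 'I_n) (hn : nat -> nat -> bool) (l : seq T) x0 :
  (forall x y : 'I_n, h x y = hn x y) ->
  (forall x y : 'I_n, e (nth x0 l x) (nth x0 l y) = h x y) ->
  sepcheck n hn -> contains_induced e h.
Proof.
move=> Hh He /allP Hc; exists (fun x => nth x0 l x); split=> // x y Exy.
have Hx : nat_of_ord x \in iota 0 n by rewrite mem_iota /= ltn_ord.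
have Hy : nat_of_ord y \in iota 0 n by rewrite mem_iota /= ltn_ord.
move: (allP (Hc _ Hx) _ Hy).
move=> /orP[/orP[/eqP/val_inj//|hxy]|/hasP[k]].
  by move: (He x y); rewrite Exy Hirr Hh hxy.
rewrite mem_iota /= => kn.
by rewrite -[k]/(nat_of_ord (Ordinal kn)) -!Hh -!He Exy eqxx.
Qed.

Ltac compute_rhs :=
  match goal with |- _ = ?r => let r' := eval vm_compute in r in change r with r' end.

Lemma tri x y z : e x z -> e y z -> e x y = false.
Proof.
move=> xz yz; apply/negbTE/negP => xy.
case: Hab => _ [_ [_ [HK _]]]; apply: HK.
apply: (@mk_induced 3 K3 (fun x y => ((x,y) \in [:: (0,1); (1,2); (0,2)]) || ((y,x) \in [:: (0,1); (1,2); (0,2)])) [:: x; y; z] x) => //.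
case=> [[|[|[|i]]] Hi] //; case=> [[|[|[|j]]] Hj] //=; compute_rhs;
  by rewrite ?Hirr // Hsym.
Qed.

Ltac close_e hd hA hB :=
  try match goal with |- is_true ?b => change (b = true) end;
  match goal with
  | |- ?E ?x ?x = _ => by rewrite Hirr
  | |- ?E (?d ?t) (?d ?s) = _ => by rewrite hd
  | H : is_true (?x \in _) |- ?E ?x _ = _ => first [by rewrite (hA _ _ _ H) | by rewrite (hB _ _ _ H)]
  | H : is_true (?x \in _) |- ?E _ ?x = _ => first [by rewrite Hsym (hA _ _ _ H) | by rewrite Hsym (hB _ _ _ H)]
  | H : ?E ?x ?y = _ |- ?E ?x ?y = _ => by rewrite H
  | H : ?E ?y ?x = _ |- ?E ?x ?y = _ => by rewrite Hsym H
  | H : is_true (?E ?x ?y) |- ?E ?x ?y = _ => by rewrite H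
  | H : is_true (?E ?y ?x) |- ?E ?x ?y = _ => by rewrite Hsym H
  end.

Lemma core (d : nat -> T) (A B : nat -> {set T}) :
 (forall t s, t <= 8 -> s <= 8 -> e (d t) (d s) = (s == t.+1) || (t == s.+1)) ->
 (forall t v, 0 < t <= 7 -> v \in A t -> forall s, s <= 8 -> e v (d s) = (s == t.-1) || (s == t.+1)) ->
 (forall t v, t <= 8 -> v \in B t -> forall s, s <= 8 -> e v (d s) = (s == t)) ->
  ((forall w w', w \in B 2 :|: A 3 -> w' \in B 2 :|: A 3 ->
      (nbhd e w :&: A 4 \subset nbhd e w' :&: A 4) ||
      (nbhd e w' :&: A 4 \subset nbhd e w :&: A 4)) /\
   (forall w w', w \in B 2 -> w' \in A 3 ->
      nbhd e w :&: A 4 \subset nbhd e w' :&: A 4)) /\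
  ((forall u u', u \in A 2 :|: B 3 -> u' \in A 2 :|: B 3 ->
      (nbhd e u :&: B 4 \subset nbhd e u' :&: B 4) ||
      (nbhd e u' :&: B 4 \subset nbhd e u :&: B 4)) /\
   (forall u u', u \in A 2 -> u' \in B 3 ->
      nbhd e u :&: B 4 \subset nbhd e u' :&: B 4)).
Proof.
move=> hd hA hB.
case: Hab => _ [HX2 [HX3 [_ HC]]].
have HC6 := HC 6 isT.
split; split.
- move=> w w' Hw Hw'.
  case: (boolP (_ \subset _)) => //= /subsetPn[a].
  rewrite !inE => /andP[wa aA] /nandP[]; last by rewrite aA.
  move/negbTE => w'a.
  apply/subsetP => a'; rewrite !inE => /andP[w'a' a'A]; rewrite a'A andbT.
  apply/negP => /negP/negbTE wa'.
  apply: HC6.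
  apply: (@mk_induced 6 (@cycle_graph 6) (fun x y => (y == x.+1 %% 6) || (x == y.+1 %% 6))
            [:: w; a; d 5; a'; w'; d 2] w) => //.
  case/setUP: Hw => Hw; case/setUP: Hw' => Hw';
  (have ww' : e w w' = false by apply: (@tri _ _ (d 2)); close_e hd hA hB);
  (have aa' : e a a' = false by apply: (@tri _ _ (d 5)); close_e hd hA hB);
  case=> [[|[|[|[|[|[|i]]]]]] Hi] //; case=> [[|[|[|[|[|[|j]]]]]] Hj] //=; compute_rhs;
  close_e hd hA hB.
- move=> w w' Hw Hw'.
  apply/subsetP => a; rewrite !inE => /andP[wa aA]; rewrite aA andbT.
  apply/negP => /negP/negbTE w'a.
  apply: HC6.
  apply: (@mk_induced 6 (@cycle_graph 6) (fun x y => (y == x.+1 %% 6) || (x == y.+1 %% 6))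
            [:: w; a; d 5; d 4; w'; d 2] w) => //.
  have ww' : e w w' = false by apply: (@tri _ _ (d 2)); close_e hd hA hB.
  case=> [[|[|[|[|[|[|i]]]]]] Hi] //; case=> [[|[|[|[|[|[|j]]]]]] Hj] //=; compute_rhs;
  close_e hd hA hB.
- move=> u u' Hu Hu'.
  case: (boolP (_ \subset _)) => //= /subsetPn[b].
  rewrite !inE => /andP[ub bB] /nandP[]; last by rewrite bB.
  move/negbTE => u'b.
  apply/subsetP => b'; rewrite !inE => /andP[u'b' b'B]; rewrite b'B andbT.
  apply/negP => /negP/negbTE ub'.
  apply: HX3.
  apply: (@mk_induced 7 X3 (fun x y =>
     ((x,y) \in [:: (0,1); (1,2); (3,4); (4,5); (0,3); (1,4); (2,5); (1,6)]) ||
     ((y,x) \in [:: (0,1); (1,2); (3,4); (4,5); (0,3); (1,4); (2,5); (1,6)]))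
            [:: b; d 4; b'; u; d 3; u'; d 5] b) => //.
  case/setUP: Hu => Hu; case/setUP: Hu' => Hu';
  (have uu' : e u u' = false by apply: (@tri _ _ (d 3)); close_e hd hA hB);
  (have bb' : e b b' = false by apply: (@tri _ _ (d 4)); close_e hd hA hB);
  case=> [[|[|[|[|[|[|[|i]]]]]]] Hi] //; case=> [[|[|[|[|[|[|[|j]]]]]]] Hj] //=; compute_rhs;
  close_e hd hA hB.
- move=> u u' Hu Hu'.
  apply/subsetP => b; rewrite !inE => /andP[ub bB]; rewrite bB andbT.
  apply/negP => /negP/negbTE u'b.
  apply: HX2.
  apply: (@mk_induced 7 X2 (fun x y =>
     ((x,y) \in [:: (0,1); (1,2); (2,3); (3,0); (0,4); (1,5); (2,6)]) ||
     ((y,x) \in [:: (0,1); (1,2); (2,3); (3,0); (0,4); (1,5); (2,6)]))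
            [:: u; d 3; d 4; b; d 1; u'; d 5] u) => //.
  have uu' : e u u' = false by apply: (@tri _ _ (d 3)); close_e hd hA hB.
  case=> [[|[|[|[|[|[|[|i]]]]]]] Hi] //; case=> [[|[|[|[|[|[|[|j]]]]]]] Hj] //=; compute_rhs;
  close_e hd hA hB.
Qed.
End S.

Theorem proposition3p6 (T : finType) (e : rel T) :
  symmetric e -> irreflexive e ->
  connected_graph e -> almost_bip_perm e ->
  forall (m : nat) (c : nat -> T), shortest_hole e m c ->
  forall i p q : nat, i < m ->
  ((p, q) = ((i + m - 2) %% m, (i + m - 1) %% m) \/ (p, q) = ((i + 2) %% m, (i + 1) %% m)) ->
  ((forall w w', w \in Bset e m c p :|: Aset e m c q -> w' \in Bset e m c p :|: Aset e m c q ->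
      (nbhd e w :&: Aset e m c i \subset nbhd e w' :&: Aset e m c i) ||
      (nbhd e w' :&: Aset e m c i \subset nbhd e w :&: Aset e m c i)) /\
   (forall w w', w \in Bset e m c p -> w' \in Aset e m c q ->
      nbhd e w :&: Aset e m c i \subset nbhd e w' :&: Aset e m c i)) /\
  ((forall u u', u \in Aset e m c p :|: Bset e m c q -> u' \in Aset e m c p :|: Bset e m c q ->
      (nbhd e u :&: Bset e m c i \subset nbhd e u' :&: Bset e m c i) ||
      (nbhd e u' :&: Bset e m c i \subset nbhd e u :&: Bset e m c i)) /\
   (forall u u', u \in Aset e m c p -> u' \in Bset e m c q ->
      nbhd e u :&: Bset e m c i \subset nbhd e u' :&: Bset e m c i)).
Proof.
move=> Hsym Hirr _ Hab m c [Hh _] i p q im Hpq.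
have Hm : 10 <= m.
  case: (leqP 10 m) => // m9.
  have m5 : 5 <= m by case: Hh.
  case: Hab => _ [_ [_ [_ HC]]]; exfalso; apply: (HC m); first by rewrite m5; lia.
  exists (fun x : 'I_m => c x); split.
    move=> x y /(proj1 (proj2 Hh) x y (ltn_ord x) (ltn_ord y)) Exy; exact: val_inj.
  by move=> x y; rewrite (proj2 (proj2 Hh) x y (ltn_ord x) (ltn_ord y)).
have m0 : 0 < m by lia.
pose K := i + m - 4.
have Ei : i = (K + 4) %% m.
  by rewrite (_ : K + 4 = i + m); [rewrite modnDr modn_small | rewrite /K; lia].
case: Hpq => [[-> ->]|[-> ->]].
- have -> : (i + m - 2) %% m = (K + 2) %% m by rewrite (_ : K + 2 = i + m - 2) // /K; lia.
  have -> : (i + m - 1) %% m = (K + 3) %% m by rewrite (_ : K + 3 = i + m - 1) // /K; lia.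
  rewrite Ei.
  exact: (core Hsym Hirr Hab (d := fun t => c ((K + t) %% m))
     (A := fun t => Aset e m c ((K + t) %% m)) (B := fun t => Bset e m c ((K + t) %% m))
     (hd Hh Hm K) (hA Hh Hm (K:=K)) (hB Hh Hm (K:=K))).
- have -> : (i + 2) %% m = (K + 6) %% m.
    by rewrite (_ : K + 6 = (i + 2) + m) ?modnDr // /K; lia.
  have -> : (i + 1) %% m = (K + 5) %% m.
    by rewrite (_ : K + 5 = (i + 1) + m) ?modnDr // /K; lia.
  rewrite Ei.
  have := (core Hsym Hirr Hab (d := fun t => c ((K + (8 - t)) %% m))
     (A := fun t => Aset e m c ((K + (8 - t)) %% m)) (B := fun t => Bset e m c ((K + (8 - t)) %% m))).
  apply.
  + move=> t s t8 s8; rewrite hd //; lia.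
  + move=> t v /andP[t0 t7] Hv s s8; rewrite (hA Hh Hm _ Hv); lia.
  + move=> t v t8 Hv s s8; rewrite (hB Hh Hm _ Hv); lia.
Qed.
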